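(* For every $Z\in\mathfrak m$, the endomorphisms $\mathrm{ad}_{JZ}^2$ and $\mathrm{ad}_Z^2$ of $\mathfrak m$ commute.
   Context: $\mathfrak g$ is a complex simple Lie algebra with a decomposition $\mathfrak g=\mathfrak k\oplus\mathfrak m$ into the $\pm1$-eigenspaces of an involutive automorphism, arising from an irreducible Hermitian symmetric space: there is $\Upsilon$ in the center of $\mathfrak k$ such that $\mathrm{ad}_\Upsilon$ has eigenvalues $\pm i$ on $\mathfrak m$, with eigenspaces $\mathfrak m^\pm$ (so $[\mathfrak k,\mathfrak m^\pm]\subseteq\mathfrak m^\pm$, $[\mathfrak m^+,\mathfrak m^+]=[\mathfrak m^-,\mathfrak m^-]=0$, $[\mathfrak m,\mathfrak m]\subseteq\mathfrak k$). $J=\mathrm{ad}_\Upsilon|_{\mathfrak m}$. Note $\mathrm{ad}_Z^2$ maps $\mathfrak m$ into $\mathfrak m$ for $Z\in\mathfrak m$. *)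

(* Defs.v *)
From HB Require Import structures.
From mathcomp Require Import all_boot all_order all_algebra.
From mathcomp Require Import complex.
From mathcomp Require Import reals.
Set Implicit Arguments. Unset Strict Implicit. Unset Printing Implicit Defensive.
Import Order.TTheory GRing.Theory Num.Theory.
Local Open Scope ring_scope.

Section Lie.
Variables (K : fieldType) (V : vectType K).

Definition lie_bracket (br : V -> V -> V) : Prop :=
  [/\ (forall a x y z, br (a *: x + y) z = a *: br x z + br y z),
      (forall a x y z, br z (a *: x + y) = a *: br z x + br z y),
      (forall x, br x x = 0) &
      (forall x y z, br x (br y z) + br y (br z x) + br z (br x y) = 0)].

Definition ad (br : V -> V -> V) (x : V) : V -> V := br x.

Definition lie_ideal (br : V -> V -> V) (U : {vspace V}) : Prop :=
  forall x u, u \in U -> br x u \in U.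

Definition simple_lie (br : V -> V -> V) : Prop :=
  lie_bracket br /\ (exists x y, br x y != 0) /\
  (forall U : {vspace V}, lie_ideal br U -> U = 0%VS \/ U = fullv).

Definition lie_involution (br : V -> V -> V) (theta : 'End(V)) : Prop :=
  (forall x y, theta (br x y) = br (theta x) (theta y)) /\
  (forall x, theta (theta x) = x).

Definition in_k (theta : 'End(V)) (x : V) : Prop := theta x = x.
Definition in_m (theta : 'End(V)) (x : V) : Prop := theta x = - x.
End Lie.

Definition hermitian_element (R : realType) (V : vectType R[i])
  (br : V -> V -> V) (theta : 'End(V)) (Ups : V) : Prop :=
  [/\ in_k theta Ups,
      (forall X, in_k theta X -> br Ups X = 0) &
      (forall X, in_m theta X -> exists Xp Xm : V,
          [/\ X = Xp + Xm, in_m theta Xp, in_m theta Xm,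
              br Ups Xp = 'i *: Xp & br Ups Xm = - ('i *: Xm)])].

(* J = ad_Upsilon restricted to m *)
Definition Jop (R : realType) (V : vectType R[i]) (br : V -> V -> V) (Ups : V) :
  V -> V := ad br Ups.

(* Main.v *)
Require Import Defs.
From HB Require Import structures.
From mathcomp Require Import all_boot all_order all_algebra.
From mathcomp Require Import complex.
From mathcomp Require Import reals.
Import GRing.Theory Num.Theory.
Local Open Scope ring_scope.
Set Implicit Arguments. Unset Strict Implicit.

Lemma self_add0 (M : zmodType) (b : M) : b = b + b -> b = 0.
Proof. by move=> h; apply/esym/(@addrI _ b); rewrite addr0 -h. Qed.

Section Basic.
Lemma br0l (K : fieldType) (V : vectType K) (br : V -> V -> V) :
  lie_bracket br -> forall z, br 0 z = 0.
Proof.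
case=> hl _ _ _ z; have := hl 1 0 0 z.
rewrite !scale1r addr0 => h; exact: self_add0.
Qed.
Lemma br0r (K : fieldType) (V : vectType K) (br : V -> V -> V) :
  lie_bracket br -> forall z, br z 0 = 0.
Proof.
case=> _ hl _ _ z; have := hl 1 0 0 z.
rewrite !scale1r addr0 => h; exact: self_add0.
Qed.
Lemma brDl (K : fieldType) (V : vectType K) (br : V -> V -> V) :
  lie_bracket br -> forall x y z, br (x + y) z = br x z + br y z.
Proof. move=> hL x y z; case: (hL) => hl _ _ _; by have := hl 1 x y z; rewrite !scale1r. Qed.
Lemma brDr (K : fieldType) (V : vectType K) (br : V -> V -> V) :
  lie_bracket br -> forall x y z, br z (x + y) = br z x + br z y.
Proof. move=> hL x y z; case: (hL) => _ hl _ _; by have := hl 1 x y z; rewrite !scale1r. Qed.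
Lemma brZl (K : fieldType) (V : vectType K) (br : V -> V -> V) :
  lie_bracket br -> forall c x z, br (c *: x) z = c *: br x z.
Proof. move=> hL c x z; case: (hL) => hl _ _ _; have := hl c x 0 z; rewrite addr0 (br0l hL) addr0; exact. Qed.
Lemma brZr (K : fieldType) (V : vectType K) (br : V -> V -> V) :
  lie_bracket br -> forall c x z, br z (c *: x) = c *: br z x.
Proof. move=> hL c x z; case: (hL) => _ hl _ _; have := hl c x 0 z; rewrite addr0 (br0r hL) addr0; exact. Qed.
Lemma brNl (K : fieldType) (V : vectType K) (br : V -> V -> V) :
  lie_bracket br -> forall x z, br (- x) z = - br x z.
Proof. by move=> hL x z; rewrite -scaleN1r (brZl hL) scaleN1r. Qed.
Lemma brNr (K : fieldType) (V : vectType K) (br : V -> V -> V) :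
  lie_bracket br -> forall x z, br z (- x) = - br z x.
Proof. by move=> hL x z; rewrite -scaleN1r (brZr hL) scaleN1r. Qed.
Lemma brBl (K : fieldType) (V : vectType K) (br : V -> V -> V) :
  lie_bracket br -> forall x y z, br (x - y) z = br x z - br y z.
Proof. by move=> hL x y z; rewrite (brDl hL) (brNl hL). Qed.
Lemma brBr (K : fieldType) (V : vectType K) (br : V -> V -> V) :
  lie_bracket br -> forall x y z, br z (x - y) = br z x - br z y.
Proof. by move=> hL x y z; rewrite (brDr hL) (brNr hL). Qed.
Lemma anti (K : fieldType) (V : vectType K) (br : V -> V -> V) :
  lie_bracket br -> forall x y, br x y = - br y x.
Proof.
move=> hL x y; case: (hL) => _ _ h0 _.
have := h0 (x + y); rewrite !(brDl hL) !(brDr hL) !h0 add0r addr0.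
by move/eqP; rewrite addr_eq0 => /eqP.
Qed.
Lemma jac (K : fieldType) (V : vectType K) (br : V -> V -> V) :
  lie_bracket br -> forall x y z, br x (br y z) = br (br x y) z + br y (br x z).
Proof.
move=> hL x y z; case: (hL) => _ _ _ hj.
have := hj x y z.
rewrite (anti hL z x) (brNr hL) (anti hL z (br x y)).
move/eqP; rewrite -addrA -opprD subr_eq0 => /eqP ->.
by rewrite addrC.
Qed.
End Basic.

Lemma three_zero (M : zmodType) (E W R L : M) :
  R = L + E -> L = - W + E -> E = - W - R -> E *+ 3 = 0.
Proof.
move=> hR hL hE; rewrite hR hL in hE.
rewrite !mulrS mulr0n addr0 {1}hE !opprD !opprK !addrA addNr add0r subrK.
by rewrite addNr.
Qed.

Definition oddv (R : realType) (V : vectType R[i]) (br : V -> V -> V)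
  (theta : 'End(V)) (Ups : V) (s : R[i]) (u : V) :=
  theta u = - u /\ br Ups u = s *: u.

Lemma br_eig (R : realType) (V : vectType R[i]) (br : V -> V -> V) (Ups u u' : V) (s s' : R[i]) :
  lie_bracket br -> br Ups u = s *: u -> br Ups u' = s' *: u' ->
  br Ups (br u u') = (s + s') *: br u u'.
Proof.
move=> hL hu hu'; by rewrite (jac hL) hu hu' (brZl hL) (brZr hL) scalerDl.
Qed.

Lemma oo_even (R : realType) (V : vectType R[i]) (br : V -> V -> V) (theta : 'End(V)) (u u' : V) :
  lie_bracket br -> lie_involution br theta -> theta u = - u -> theta u' = - u' ->
  theta (br u u') = br u u'.
Proof.
by move=> hL [hh _] hu hu'; rewrite hh hu hu' (brNl hL) (brNr hL) opprK.
Qed.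

Lemma oo_zero (R : realType) (V : vectType R[i]) (br : V -> V -> V) (theta : 'End(V)) (Ups : V)
  (s : R[i]) (u u' : V) :
  lie_bracket br -> lie_involution br theta -> hermitian_element br theta Ups ->
  s != 0 -> oddv br theta Ups s u -> oddv br theta Ups s u' -> br u u' = 0.
Proof.
move=> hL hI [_ hz _] hs [tu eu] [tu' eu'].
have e := oo_even hL hI tu tu'.
have z := hz _ e.
have := br_eig hL eu eu'; rewrite z => /esym/eqP; rewrite scaler_eq0 => /orP [|/eqP //].
by rewrite -mulr2n -mulr_natr mulf_eq0 (negbTE hs) pnatr_eq0.
Qed.

Lemma oe_l (R : realType) (V : vectType R[i]) (br : V -> V -> V) (theta : 'End(V)) (Ups : V)
  (s : R[i]) (u e : V) :
  lie_bracket br -> lie_involution br theta -> hermitian_element br theta Ups ->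
  oddv br theta Ups s u -> theta e = e -> oddv br theta Ups s (br u e).
Proof.
move=> hL [hh _] [_ hz _] [tu eu] te; split.
  by rewrite hh tu te (brNl hL).
by rewrite (jac hL) eu (hz _ te) (br0r hL) addr0 (brZl hL).
Qed.

Lemma oe_r (R : realType) (V : vectType R[i]) (br : V -> V -> V) (theta : 'End(V)) (Ups : V)
  (s : R[i]) (u e : V) :
  lie_bracket br -> lie_involution br theta -> hermitian_element br theta Ups ->
  oddv br theta Ups s u -> theta e = e -> oddv br theta Ups s (br e u).
Proof.
move=> hL [hh _] [_ hz _] [tu eu] te; split.
  by rewrite hh tu te (brNr hL).
by rewrite (jac hL) eu (hz _ te) (br0l hL) add0r (brZr hL).
Qed.

Lemma core (R : realType) (V : vectType R[i]) (br : V -> V -> V) (theta : 'End(V)) (Ups : V)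
  (s : R[i]) (a v x : V) :
  lie_bracket br -> lie_involution br theta -> hermitian_element br theta Ups ->
  s != 0 -> oddv br theta Ups s a -> oddv br theta Ups (- s) v -> oddv br theta Ups s x ->
  br (a - v) (br (a - v) (br (a + v) (br (a + v) x))) =
  br (a + v) (br (a + v) (br (a - v) (br (a - v) x))).
Proof.
move=> hL hI hH hs ao vo xo.
have hs' : - s != 0 by rewrite oppr_eq0.
have ye : theta (br v x) = br v x := oo_even hL hI vo.1 xo.1.
have ax : br a x = 0 := oo_zero hL hI hH hs ao xo.
have po := oe_l hL hI hH ao ye.
have qo := oe_l hL hI hH vo ye.
have ap : br a (br a (br v x)) = 0 := oo_zero hL hI hH hs ao po.
have vq : br v (br v (br v x)) = 0 := oo_zero hL hI hH hs' vo qo.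
have he : theta (br a v) = br a v := oo_even hL hI ao.1 vo.1.
have wo := oe_r hL hI hH vo he.
have vw : br v (br (br a v) v) = 0 := oo_zero hL hI hH hs' vo wo.
set y := br v x in ye po qo ap vq *.
set p := br a y in po ap *.
set q := br v y in qo vq *.
set h := br a v in he wo vw *.
set w := br h v in wo vw *.
have J : br v (br a q) = br v (br v p).
  set E := br v (br h y).
  have i1 : br v (br a q) = br v (br v p) + E.
    by rewrite /q (jac hL a v y) -/h (brDr hL) addrC.
  have i2 : br v (br v p) = - br w y + E.
    rewrite /p /y (jac hL a v x) ax (br0r hL) addr0 -/h (jac hL v h x) -/y.
    rewrite (anti hL v h) -/w (brNl hL) (brDr hL) (brNr hL) (jac hL v w x) vw (br0l hL) add0r.
    done.
  have i3 : E = - br w y - br v (br a q).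
    rewrite /E (jac hL v h y) (anti hL v h) -/w (brNl hL) -/q.
    have := jac hL a v q; rewrite vq (br0r hL) -/h => /esym/eqP; rewrite addr_eq0.
    by move=> /eqP ->.
  have E3 := three_zero i1 i2 i3.
  have E0 : E = 0.
    move/eqP: E3; rewrite -scaler_nat scaler_eq0 pnatr_eq0 /= => /eqP //.
  by rewrite i1 E0 addr0.
have Fx : br (a + v) x = y by rewrite (brDl hL) ax add0r.
have Dx : br (a - v) x = - y by rewrite (brBl hL) ax sub0r.
have Fy : br (a + v) y = p + q by rewrite (brDl hL).
have Dy : br (a - v) y = p - q by rewrite (brBl hL).
have DPQ : br (a - v) (p + q) = br a q - br v p.
  by rewrite (brBl hL) !(brDr hL) ap vq add0r addr0.
have FPQ : br (a + v) (p - q) = - br a q + br v p.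
  by rewrite (brDl hL) !(brBr hL) ap vq sub0r subr0.
rewrite Fx Fy DPQ Dx (brNr hL) Dy (brNr hL) FPQ opprD opprK.
rewrite !(brBr hL) !(brBl hL) !(brDl hL) J.
by rewrite opprB addrA subrK opprD addrACA subrr addr0.
Qed.

Theorem proposition4p2 (R : realType) (V : vectType R[i])
  (br : V -> V -> V) (theta : 'End(V)) (Ups : V) :
  simple_lie br ->
  lie_involution br theta ->
  hermitian_element br theta Ups ->
  forall Z : V, in_m theta Z ->
  forall X : V, in_m theta X ->
    ad br (Jop br Ups Z) (ad br (Jop br Ups Z) (ad br Z (ad br Z X))) =
    ad br Z (ad br Z (ad br (Jop br Ups Z) (ad br (Jop br Ups Z) X))).
Proof.
move=> [hL _] hI hH Z hZ X hX.
have hH' := hH; case: hH' => _ _ hd.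
have [Zp [Zm [eZ tZp tZm eZp eZm]]] := hd Z hZ.
have [Xp [Xm [eX tXp tXm eXp eXm]]] := hd X hX.
have hi : ('i : R[i]) != 0 by exact: neq0Ci.
have hi' : - ('i : R[i]) != 0 by rewrite oppr_eq0.
have ZpO : oddv br theta Ups 'i Zp by [].
have ZmO : oddv br theta Ups (- 'i) Zm by split; rewrite // scaleNr.
have XpO : oddv br theta Ups 'i Xp by [].
have XmO : oddv br theta Ups (- 'i) Xm by split; rewrite // scaleNr.
have eJ : Jop br Ups Z = 'i *: (Zp - Zm).
  by rewrite /Jop /ad eZ (brDr hL) eZp eZm scalerBr.
rewrite /ad eJ eX !(brDr hL).
have kp := core hL hI hH hi ZpO ZmO XpO.
have ZpO2 : oddv br theta Ups (- - 'i) Zp by rewrite opprK.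
have km := core hL hI hH hi' ZmO ZpO2 XmO.
have eJ' : 'i *: (Zp - Zm) = (- 'i) *: (Zm - Zp) by rewrite scaleNr -scalerN opprB.
congr (_ + _).
  rewrite eZ !(brZl hL) !(brZr hL) kp //.
rewrite eJ' eZ [Zp + Zm]addrC !(brZl hL) !(brZr hL) km //.
Qed.
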